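(* For all integers $m\ge 2$, $n\ge 2$ there exist a complete DFA $M$ with $m$ states and a complete DFA $N$ with $n$ states such that every DFA accepting $L(M)^R\cup L(N)$ has at least $2^m\cdot n-n+1$ states. In particular this holds for the following DFAs over $\Sigma=\{a,b,c,d\}$: $M=(\{0,\dots,m-1\},\Sigma,\delta_M,0,\{0\})$ with $\delta_M(0,a)=m-1$, $\delta_M(i,a)=i-1$ for $1\le i\le m-1$; $\delta_M(0,b)=1$, $\delta_M(i,b)=i$ for $1\le i\le m-1$; $\delta_M(0,c)=1$, $\delta_M(1,c)=0$, $\delta_M(j,c)=j$ for $2\le j\le m-1$; $\delta_M(i,d)=i$ for all $i$; and $N=(\{0,\dots,n-1\},\Sigma,\delta_N,0,\{0\})$ with $\delta_N(i,a)=\delta_N(i,b)=\delta_N(i,c)=i$ and $\delta_N(i,d)=i+1\bmod n$ for all $i$.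
   Context: DFAs are complete deterministic finite automata $(Q,\Sigma,\delta,s,F)$; $L(M)$ is the accepted language; $L^R=\{w^R: w\in L\}$ is the reversal of $L$. *)

(* Defs.v *)
From mathcomp Require Import all_boot.
Set Implicit Arguments. Unset Strict Implicit. Unset Printing Implicit Defensive.

Record dfa (A : finType) := DFA {
  dstate : finType;
  dtrans : dstate -> A -> dstate;
  dstart : dstate;
  dfinal : pred dstate }.

Definition dtrans_star (A : finType) (M : dfa A) (q : dstate M) (w : seq A) :
  dstate M := foldl (@dtrans A M) q w.

Definition accepts (A : finType) (M : dfa A) (w : seq A) : bool :=
  @dfinal A M (@dtrans_star A M (@dstart A M) w).

Definition revU (A : finType) (M N : dfa A) : pred (seq A) :=
  fun w => accepts M (rev w) || accepts N w.

Definition recognizes (A : finType) (D : dfa A) (L : pred (seq A)) : Prop :=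
  forall w, accepts D w = L w.

(* Alphabet Sigma = {a,b,c,d} encoded as 'I_4 : a = 0, b = 1, c = 2, d = 3. *)
Definition Sigma := 'I_4.

(* State i of the m-state DFA M is the ordinal i : 'I_m.-1.+1 (m >= 2, so
   this type has exactly m elements); inord is only applied to values < m. *)
Definition deltaM_nat (m i : nat) (x : Sigma) : nat :=
  match nat_of_ord x with
  | 0 => if i == 0 then m - 1 else i - 1
  | 1 => if i == 0 then 1 else i
  | 2 => if i == 0 then 1 else if i == 1 then 0 else i
  | _ => i
  end.

Definition dfaM (m : nat) : dfa Sigma :=
  @DFA Sigma 'I_m.-1.+1
    (fun q x => inord (deltaM_nat m q x)) (inord 0) (fun q => val q == 0).

Definition deltaN_nat (n i : nat) (x : Sigma) : nat :=
  match nat_of_ord x with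
  | 3 => (i + 1) %% n
  | _ => i
  end.

Definition dfaN (n : nat) : dfa Sigma :=
  @DFA Sigma 'I_n.-1.+1
    (fun q x => inord (deltaN_nat n q x)) (inord 0) (fun q => val q == 0).

(* Main.v *)
Require Import Defs.
From mathcomp Require Import all_boot all_fingroup.
Set Implicit Arguments. Unset Strict Implicit. Unset Printing Implicit Defensive.

Definition la : Sigma := @Ordinal 4 0 isT.
Definition lb : Sigma := @Ordinal 4 1 isT.
Definition lc : Sigma := @Ordinal 4 2 isT.
Definition ld : Sigma := @Ordinal 4 3 isT.

Section MS.
Variable m' : nat.
Local Notation m := m'.+2.
Local Notation M := (dfaM m).
Local Notation Q := 'I_m.

Definition dM (q : Q) (x : Sigma) : Q := @dtrans Sigma M q x.

Lemma val_dM (q : Q) x : val (dM q x) = deltaM_nat m q x.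
Proof.
rewrite /dM /= inordK //.
case: x => [[|[|[|[|k]]]] hx] //=; case: q => [[|[|i]] hi] //=; rewrite /deltaM_nat //=.
exact: ltnW hi.
Qed.

Lemma nat_dM (q : Q) x : nat_of_ord (dM q x) = deltaM_nat m q x.
Proof. exact: val_dM. Qed.

Lemma dM_d q : dM q ld = q.
Proof. by apply: val_inj; rewrite val_dM. Qed.

Definition Sof (u : seq Sigma) : {set Q} :=
  [set q : Q | val (@dtrans_star Sigma M q (rev u)) == 0].

Definition Reach (X : {set Q}) := exists u, Sof u = X.

Lemma foldl_d (q : Q) k : @dtrans_star Sigma M q (nseq k ld) = q.
Proof.
elim: k q => //= k IH q. rewrite /dtrans_star /=.
rewrite -[RHS](dM_d q).
exact: IH.
Qed.

Lemma Sof_rcons u x : Sof (rcons u x) = [set q | dM q x \in Sof u].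
Proof. by apply/setP=> q; rewrite !inE rev_rcons. Qed.

Lemma Sof_nil : Sof [::] = [set ord0].
Proof. by apply/setP=> q; rewrite !inE. Qed.

Lemma Sof_d u k : Sof (u ++ nseq k ld) = Sof u.
Proof.
apply/setP=> q; rewrite !inE rev_cat rev_nseq /dtrans_star foldl_cat.
by have := foldl_d q k; rewrite /dtrans_star => ->.
Qed.

Lemma reach_letter X x : Reach X -> Reach [set q | dM q x \in X].
Proof. by case=> u <-; exists (rcons u x); rewrite Sof_rcons. Qed.


Lemma Reach_eq X Y : X = Y -> Reach X -> Reach Y.
Proof. by move->. Qed.

Definition Gp (p : {perm Q}) := forall X, Reach X -> Reach [set q | p q \in X].

Lemma Gp_mul p r : Gp p -> Gp r -> Gp (p * r)%g.
Proof.
move=> Hp Hr X RX; apply: Reach_eq (Hp _ (Hr _ RX)).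
by apply/setP=> q; rewrite !inE permM.
Qed.

Lemma Gp1 : Gp 1%g.
Proof. by move=> X RX; apply: Reach_eq RX; apply/setP=> q; rewrite !inE perm1. Qed.

Lemma Gp_exp p k : Gp p -> Gp (p ^+ k)%g.
Proof.
move=> Hp; elim: k => [|k IH]; first by rewrite expg0; exact: Gp1.
by rewrite expgS; apply: Gp_mul.
Qed.

Lemma Gp_inv p : Gp p -> Gp (p^-1)%g.
Proof. by move=> Hp; rewrite invg_expg; apply: Gp_exp. Qed.

Lemma Gp_conj t g : Gp t -> Gp g -> Gp (t ^ g)%g.
Proof. by move=> Ht Hg; rewrite conjgE; apply: Gp_mul; [apply: Gp_inv|apply: Gp_mul]. Qed.

Definition sa (q : Q) : Q := inord (if (q : nat) == m'.+1 then 0 else q.+1).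

Lemma dMaK : cancel (dM ^~ la) sa.
Proof.
move=> q; apply: val_inj; rewrite /sa !nat_dM.
case: q => [[|i] hi]; rewrite /deltaM_nat /=.
  by rewrite subn1 /= eqxx inordK.
rewrite subSS subn0.
have -> : (i == m'.+1) = false.
  by apply/negbTE; rewrite neq_ltn; rewrite ltnS in hi; rewrite hi.
by rewrite inordK.
Qed.

Definition pa : {perm Q} := perm (can_inj dMaK).

Lemma Gp_pa : Gp pa.
Proof.
move=> X RX; apply: Reach_eq (reach_letter la RX).
by apply/setP=> q; rewrite !inE permE.
Qed.

Definition o0 : Q := inord 0.
Definition o1 : Q := inord 1.

Lemma val_o0 : nat_of_ord o0 = 0. Proof. by rewrite inordK. Qed.
Lemma val_o1 : nat_of_ord o1 = 1. Proof. by rewrite inordK. Qed.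

Lemma dM_c q : dM q lc = tperm o0 o1 q.
Proof.
apply: val_inj; rewrite /= nat_dM; case: tpermP => [->|->|H0 H1].
- by rewrite val_o0 val_o1.
- by rewrite val_o0 val_o1.
have h0 : ((q : nat) == 0) = false.
  by apply/negbTE; apply/eqP => h; apply: H0; apply: val_inj; rewrite /= h val_o0.
have h1 : ((q : nat) == 1) = false.
  by apply/negbTE; apply/eqP => h; apply: H1; apply: val_inj; rewrite /= h val_o1.
by rewrite /deltaM_nat /= h0 h1.
Qed.

Lemma Gp_c : Gp (tperm o0 o1).
Proof.
move=> X RX; apply: Reach_eq (reach_letter lc RX).
by apply/setP=> q; rewrite !inE dM_c.
Qed.

Lemma pai_val i : i.+1 < m -> (pa^-1)%g (inord i) = inord i.+1 :> Q.
Proof.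
move=> hi.
have H : pa (inord i.+1) = inord i.
  apply: val_inj; rewrite permE /= nat_dM !inordK //; last exact: ltnW hi.
  by rewrite /deltaM_nat /= subn1.
by rewrite -H permK.
Qed.

Lemma paik_val k i : i + k < m -> ((pa^-1) ^+ k)%g (inord i) = inord (i + k) :> Q.
Proof.
elim: k i => [|k IH] i hik; first by rewrite expg0 perm1 addn0.
rewrite expgS permM pai_val; last by apply: leq_ltn_trans hik; rewrite addnS ltnS leq_addr.
by rewrite IH addSnnS.
Qed.

Lemma Gp_adj k : k.+1 < m -> Gp (tperm (inord k) (inord k.+1)).
Proof.
move=> hk.
have -> : tperm (inord k) (inord k.+1) = (tperm o0 o1 ^ ((pa^-1) ^+ k))%g :> {perm Q}.
  rewrite tpermJ /o0 /o1 !paik_val //; last by apply: ltnW.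
apply: Gp_conj; first exact: Gp_c.
by apply: Gp_exp; apply: Gp_inv; exact: Gp_pa.
Qed.

Lemma Gp_t0k k : k < m -> Gp (tperm o0 (inord k)).
Proof.
elim: k => [|k IH] hk; first by rewrite tperm1; exact: Gp1.
case: k IH hk => [|k] IH hk; first exact: Gp_c.
have -> : tperm o0 (inord k.+2) =
   (tperm o0 (inord k.+1) ^ tperm (inord k.+1) (inord k.+2))%g :> {perm Q}.
  rewrite tpermJ tpermL tpermD //.
  - by apply/eqP => /(congr1 val); rewrite /= val_o0 inordK // ltnW.
  - by apply/eqP => /(congr1 val); rewrite /= val_o0 inordK.
apply: Gp_conj; first by apply: IH; apply: ltnW.
exact: Gp_adj.
Qed.

Lemma Gp_t0 j : Gp (tperm o0 j).
Proof. by rewrite -(inord_val j); apply: Gp_t0k. Qed.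

Lemma Gp_t1 z : Gp (tperm o1 z).
Proof.
case: (eqVneq z o0) => [->|h0]; first by rewrite tpermC; exact: Gp_c.
case: (eqVneq z o1) => [->|h1]; first by rewrite tperm1; exact: Gp1.
rewrite -(@tpermJ_tperm _ o0 o1 z); first by apply: Gp_conj; [exact: Gp_t0|exact: Gp_c].
- by rewrite eq_sym.
- by rewrite eq_sym.
Qed.

Lemma o0E : o0 = ord0.
Proof. by apply: val_inj; rewrite /= val_o0. Qed.

Lemma o1o0 : o1 != o0.
Proof. by apply/eqP => /(congr1 (@nat_of_ord _)); rewrite val_o0 val_o1. Qed.

Lemma dM_b q : dM q lb = if q == o0 then o1 else q.
Proof.
apply: val_inj; rewrite /= nat_dM; case: eqP => [->|hq].
  by rewrite val_o0 val_o1.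
rewrite /deltaM_nat /=.
have -> : ((q : nat) == 0) = false.
  by apply/negbTE; apply/eqP => h; apply: hq; apply: val_inj; rewrite /= h val_o0.
by [].
Qed.

Lemma Sof_b : Sof [:: lb] = set0.
Proof.
apply/setP=> q; rewrite !inE.
change ((val (dM q lb) == 0) = false); rewrite dM_b.
case: (q =P o0) => [_|hq]; first by rewrite /= val_o1.
by apply/negbTE; apply/eqP => h; apply: hq; apply: val_inj; rewrite /= h val_o0.
Qed.

Lemma reach_card k (X : {set Q}) : #|X| = k.+1 -> Reach X.
Proof.
elim: k X => [|k IH] X hX.
  have /cards1P [x ->] : #|X| == 1 by rewrite hX.
  have R0 : Reach [set ord0] by exists [::]; exact: Sof_nil.
  apply: Reach_eq (Gp_t0 x R0); apply/setP=> q; rewrite !inE -o0E.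
  by rewrite (canF_eq (tpermK o0 x)) tpermL.
have [x xX] : exists x, x \in X by apply/card_gt0P; rewrite hX.
have hZ : #|X :\ x| = k.+1 by move: hX; rewrite (cardsD1 x) xX add1n => -[].
have [y yZ] : exists y, y \in X :\ x by apply/card_gt0P; rewrite hZ.
have RZ := IH _ hZ.
set t := tperm o0 x.
set y' := t y.
set r := tperm o1 y'.
have yx : y != x by move: yZ; rewrite !inE => /andP[].
have y'0 : y' != o0.
  by rewrite /y' (canF_eq (tpermK o0 x)) tpermL.
have r0 : r o0 = o0 by rewrite /r tpermD // ?o1o0 // eq_sym.
have RW := Gp_t1 y' (Gp_t0 x RZ).
have RW' := reach_letter lb RW.
have RV := Gp_t0 x (Gp_t1 y' RW').
apply: Reach_eq RV; apply/setP=> q; rewrite !inE dM_b.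
case: (r (t q) =P o0) => [h|h].
  have qx : q = x.
    by rewrite -(tpermK o0 x q) -/t -(tpermK o1 y' (t q)) -/r h r0 /t tpermL.
  rewrite qx xX tpermL /y' tpermK.
  by rewrite !inE in yZ.
rewrite tpermK tpermK.
have qx : q != x.
  apply/eqP=> qx; apply: h; rewrite qx tpermR tpermD // ?o1o0 // eq_sym.
by rewrite qx.
Qed.

Lemma reach_all (X : {set Q}) : Reach X.
Proof.
case: (set_0Vmem X) => [->|[x xX]]; first by exists [:: lb]; exact: Sof_b.
have : 0 < #|X| by apply/card_gt0P; exists x.
case hX: #|X| => [//|k] _; exact: reach_card hX.
Qed.

End MS.

Section NS.
Variable n' : nat.
Local Notation n := n'.+2.
Local Notation N := (dfaN n).

Lemma N_state (q : 'I_n) w :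
  nat_of_ord (@dtrans_star Sigma N q w) = (q + count_mem ld w) %% n.
Proof.
elim: w q => [|x w IH] q.
  by rewrite /= addn0 modn_small.
rewrite [LHS](_ : _ = nat_of_ord (@dtrans_star Sigma N (@dtrans Sigma N q x) w)) //.
rewrite IH /= inordK; last first.
  case: x => [[|[|[|[|k]]]] hx] //=; rewrite /deltaN_nat /=; by rewrite ?ltn_pmod.
rewrite addnA; case: x => [[|[|[|[|k]]]] hx] //=; rewrite /deltaN_nat /= ?addn0 //.
by rewrite modnDml addn1.
Qed.

End NS.

Section MS2.
Variable m' : nat.
Local Notation m := m'.+2.
Local Notation M := (dfaM m).

Lemma walk j i : j <= i -> i < m ->
  @dtrans_star Sigma M (inord i) (nseq j la) = inord (i - j).
Proof.
elim: j i => [|j IH] i hji hi; first by rewrite subn0.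
case: i hji hi => [//|i] hji hi.
rewrite [LHS](_ : _ = @dtrans_star Sigma M (dM (inord i.+1) la) (nseq j la)) //.
have -> : dM (inord i.+1) la = inord i :> 'I_m.
  apply: val_inj; rewrite /= nat_dM !inordK //; last exact: ltnW.
  by rewrite /deltaM_nat /= subn1.
by rewrite IH // ?subSS // ltnW.
Qed.

Lemma eM_reach (q : 'I_m) : exists i, @dtrans_star Sigma M (inord 0) (nseq i la) = q.
Proof.
case: q => [[|q] hq].
  by exists 0; apply: val_inj; rewrite /= inordK.
exists (m' - q).+1.
rewrite [LHS](_ : _ = @dtrans_star Sigma M (dM (inord 0) la) (nseq (m' - q) la)) //.
have -> : dM (inord 0) la = inord m'.+1 :> 'I_m.
  by apply: val_inj; rewrite /= nat_dM !inordK //= subn1.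
have hq' : q <= m' by rewrite !ltnS in hq.
rewrite walk //; last exact: leq_trans (leq_subr _ _) (leqnSn _).
apply: val_inj; rewrite /= subSn ?leq_subr // subKn // inordK //.
Qed.

End MS2.

Section Main.
Variables m' n' : nat.
Local Notation m := m'.+2.
Local Notation n := n'.+2.
Local Notation M := (dfaM m).
Local Notation N := (dfaN n).
Local Notation Q := 'I_m.

Lemma L_cat u w : revU M N (u ++ w) =
  (@dtrans_star Sigma M (inord 0) (rev w) \in Sof m' u) ||
  ((count_mem ld u + count_mem ld w) %% n == 0).
Proof.
rewrite /revU /accepts rev_cat inE; congr orb.
  by rewrite /dtrans_star foldl_cat.
have := N_state (inord 0 : 'I_n) (u ++ w).
rewrite /= inordK // add0n count_cat => ->.
by [].
Qed.

Lemma modn_ne (a b : nat) : a < n -> b < n -> a != b -> (b + (n - a)) %% n != 0.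
Proof.
move=> ha hb hab; case: (ltngtP a b) => [ab|ba|e]; last by rewrite e eqxx in hab.
- rewrite -{1}(subnK (ltnW ab)) -addnA subnKC ?(ltnW ha) // modnDr modn_small.
    by rewrite subn_eq0 -ltnNge.
  exact: leq_ltn_trans (leq_subr a b) hb.
- rewrite modn_small.
    by rewrite addn_eq0 subn_eq0 leqNgt ha andbF.
  by rewrite -{2}(subnKC (ltnW ha)) ltn_add2r.
Qed.

Lemma dist (X X' : {set Q}) k k' : k < n -> k' < n ->
  (X != setT) || (k == 0) -> (X' != setT) || (k' == 0) ->
  (forall q j, (q \in X) || ((k + j) %% n == 0) = (q \in X') || ((k' + j) %% n == 0)) ->
  X = X' /\ k = k'.
Proof.
move=> hk hk' TX TX' H.
have notin (Y : {set Q}) : Y != setT -> exists q, q \notin Y.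
  move=> hY; case: (pickP [pred q | q \notin Y]) => [q hq|h0]; first by exists q.
  move/eqP: hY; case; apply/setP => q; rewrite inE.
  by move: (h0 q) => /= /negbFE.
have kk : k = k'.
  case: (eqVneq k k') => // hne.
  case: (eqVneq X' setT) => hX'.
    rewrite hX' eqxx /= in TX'.
    move/eqP: TX' => k'0.
    have kn0 : k != 0 by rewrite -k'0.
    have XT : X != setT by move: TX; rewrite (negbTE kn0) orbF.
    have [q hq] := notin X XT.
    by have := H q 0; rewrite hX' k'0 !addn0 inE (negbTE hq) /= modn_small // => /eqP.
  have [q hq] := notin X' hX'.
  have := H q (n - k); rewrite (negbTE hq) /= subnKC ?(ltnW hk) // modnn eqxx orbT.
  move/esym/eqP => h; by move: (modn_ne hk hk' hne); rewrite h.
split => //; apply/setP => q.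
have := H q (n - k).+1; rewrite -kk addnS subnKC ?(ltnW hk) //.
have h1 : n.+1 %% n = 1 by rewrite -addn1 modnDl modn_small.
by rewrite h1 !orbF.
Qed.

Lemma word_ex (p : {set Q} * 'I_n) :
  exists u, (Sof m' u == p.1) && (count_mem ld u %% n == p.2).
Proof.
have [u hu] := reach_all p.1.
exists (u ++ nseq (p.2 + n'.+1 * count_mem ld u) ld).
rewrite Sof_d hu eqxx /= count_cat count_nseq /= mul1n addnCA -mulSn.
by rewrite (addnC p.2) (mulnC n) modnMDl modn_small.
Qed.

Lemma main_bound (D : dfa Sigma) : recognizes D (revU M N) ->
  2 ^ m * n - n + 1 <= #|dstate D|.
Proof.
move=> hD.
pose word p := xchoose (word_ex p).
have wS p : Sof m' (word p) = p.1 by have /andP[/eqP] := xchooseP (word_ex p).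
have wK p : count_mem ld (word p) %% n = p.2.
  by have /andP[_ /eqP] := xchooseP (word_ex p).
pose g p := @dtrans_star Sigma D (dstart D) (word p).
pose T := [set p : {set Q} * 'I_n | (p.1 != setT) || (p.2 == ord0)].
have inj : {in T &, injective g}.
  move=> p p' hp hp' hg.
  have H w : revU M N (word p ++ w) = revU M N (word p' ++ w).
    rewrite -!hD /accepts /dtrans_star !foldl_cat.
    by move: hg; rewrite /g /dtrans_star => ->.
  have H' q j : (q \in p.1) || ((p.2 + j) %% n == 0) =
                (q \in p'.1) || ((p'.2 + j) %% n == 0).
    have [i hi] := eM_reach q.
    have := H (nseq j ld ++ nseq i la).
    rewrite !L_cat !rev_cat !rev_nseq /dtrans_star foldl_cat.
    move: hi; rewrite /dtrans_star => ->; have := foldl_d q j; rewrite /dtrans_star => ->.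
    rewrite !count_cat !count_nseq /= mul1n mul0n addn0.
    by rewrite -(modnDml (count_mem ld (word p))) -(modnDml (count_mem ld (word p'))) !wK -!wS.
  move: hp hp'; rewrite !inE => hp hp'.
  have [e1 e2] := dist (ltn_ord p.2) (ltn_ord p'.2) hp hp' H'.
  move: e1 e2; case: p {H H' hp hg} => X k; case: p' {hp'} => X' k' /= -> e2.
  by congr pair; apply: val_inj.
have hC : ~: T = [set (setT, k) | k in [set~ (ord0 : 'I_n)]].
  apply/setP => [[X k]]; rewrite inE; apply/idP/imsetP.
    rewrite inE /= negb_or negbK => /andP[/eqP-> hk].
    by exists k => //; rewrite !inE.
  case=> k'; rewrite inE => hk [-> ->].
  rewrite !inE /= eqxx /=; by rewrite !inE in hk.
have cC : #|~: T| = n'.+1.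
  rewrite hC card_imset; last by move=> a b [].
  by rewrite cardsC1 card_ord.
have cF : #|{: {set Q} * 'I_n}| = 2 ^ m * n.
  by rewrite card_prod -cardsT -powersetT card_powerset cardsT !card_ord.
have cT : #|T| = 2 ^ m * n - n'.+1.
  by rewrite -cF -(cardsC T) cC addnK.
have -> : 2 ^ m * n - n + 1 = #|T|.
  rewrite cT addn1 subnSK //.
  apply: leq_trans (leq_pmull _ _); first exact: ltnSn.
  by rewrite expn_gt0.
rewrite -(card_in_imset inj); exact: max_card.
Qed.

End Main.

Unset Implicit Arguments.

Theorem theorem8 (m n : nat) (hm : 2 <= m) (hn : 2 <= n) :
  (exists (A : finType) (M N : dfa A),
      #|dstate M| = m /\ #|dstate N| = n /\
      forall D : dfa A, recognizes D (revU M N) ->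
        2 ^ m * n - n + 1 <= #|dstate D|)
  /\
  (#|dstate (dfaM m)| = m /\ #|dstate (dfaN n)| = n /\
   forall D : dfa Sigma, recognizes D (revU (dfaM m) (dfaN n)) ->
     2 ^ m * n - n + 1 <= #|dstate D|).
Proof.
case: m hm => [|[|m']] // _; case: n hn => [|[|n']] // _.
have main : #|dstate (dfaM m'.+2)| = m'.+2 /\ #|dstate (dfaN n'.+2)| = n'.+2 /\
   forall D : dfa Sigma, recognizes D (revU (dfaM m'.+2) (dfaN n'.+2)) ->
     2 ^ m'.+2 * n'.+2 - n'.+2 + 1 <= #|dstate D|.
  by split; [exact: card_ord | split; [exact: card_ord | exact: main_bound]].
split => //; by exists Sigma, (dfaM m'.+2), (dfaN n'.+2).
Qed.
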